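(* Let $d\ge 2$. There exists a constant $c\in(0,1)$ depending only on $d$ such that the following holds for every finite field $\mathbb F_q$ of characteristic greater than two. Let $E,F\subset \mathbb F_q^d$ with $(0,\ldots,0)\notin E$. Then $$|\Pi(E,F)|\ \ge\ c\,\min\left\{ q,\ \frac{|E|\,|F|^2}{q^{2d-1}\sum_{x\in \mathbb F_q^{d}\setminus\{0\}} \sum_{s\in\mathbb F_q^*}E(sx)\, |\widehat{F}(x)|^2}\right\},$$ where the second entry of the minimum is interpreted as $+\infty$ if the double sum in its denominator vanishes and $E$ is nonempty.
   Context: $\mathbb F_q$ is a finite field with $q$ elements and characteristic greater than two; $\mathbb F_q^*=\mathbb F_q\setminus\{0\}$. For $E,F\subset\mathbb F_q^d$, $\Pi(E,F)=\{x\cdot y: x\in E,\ y\in F\}\subset\mathbb F_q$, where $x\cdot y=\sum_i x_iy_i$. A set is identified with its indicator function, so $E(z)=1$ if $z\in E$ and $0$ otherwise. Fix a nontrivial additive character $\psi:\mathbb F_q\to\{u\in\mathbb C:|u|=1\}$; for $f:\mathbb F_q^d\to\mathbb C$ the Fourier transform is $\widehat f(m)=q^{-d}\sum_{x\in\mathbb F_q^d} f(x)\psi(-x\cdot m)$. *)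

(* Defs.v *)
From HB Require Import structures.
From mathcomp Require Import all_boot all_order all_algebra all_field.
Set Implicit Arguments. Unset Strict Implicit. Unset Printing Implicit Defensive.
Import Order.TTheory GRing.Theory Num.Theory.
Local Open Scope ring_scope.

Definition dotv (K : finFieldType) (d : nat) (x y : 'rV[K]_d) : K :=
  \sum_(i < d) x 0 i * y 0 i.

Definition Pi (K : finFieldType) (d : nat) (E F : {set 'rV[K]_d}) : {set K} :=
  [set dotv x y | x in E, y in F].

Definition is_nontriv_add_char (K : finFieldType) (psi : K -> algC) : Prop :=
  (forall a b, psi (a + b) = psi a * psi b) /\ (forall a, `|psi a| = 1) /\
  (exists a, psi a != 1).

Definition ind (T : finType) (A : {set T}) (x : T) : algC := (x \in A)%:R.

Definition fourier (K : finFieldType) (d : nat) (psi : K -> algC)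
    (f : 'rV[K]_d -> algC) (m : 'rV[K]_d) : algC :=
  (#|K|%:R ^- d) * \sum_(x : 'rV[K]_d) f x * psi (- dotv x m).

Definition lineSum (K : finFieldType) (d : nat) (psi : K -> algC)
    (E F : {set 'rV[K]_d}) : algC :=
  \sum_(x : 'rV[K]_d | x != 0) \sum_(s : K | s != 0)
     ind E (s *: x) * `|fourier psi (ind F) x| ^+ 2.

(* Main.v *)
Require Import Defs.
From HB Require Import structures.
From mathcomp Require Import all_boot all_order all_algebra all_field.
From mathcomp Require Import ring.
Import Order.TTheory GRing.Theory Num.Theory.
Local Open Scope ring_scope.

Lemma CS_sum (I : finType) (P : pred I) (a : I -> algC) :
  `|\sum_(i | P i) a i| ^+ 2 <= #|P|%:R * \sum_(i | P i) `|a i| ^+ 2.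
Proof.
set n : algC := #|P|%:R; set s := \sum_(i | P i) a i.
have key : \sum_(i | P i) `|n * a i - s| ^+ 2
   = n * (n * \sum_(i | P i) `|a i| ^+ 2 - `|s| ^+ 2).
  under eq_bigr => i _ do rewrite normCK rmorphB rmorphM /= conjC_nat.
  have -> : \sum_(i | P i) (n * a i - s) * (n * (a i)^* - s^*)
     = \sum_(i | P i) (n * n * (a i * (a i)^*)) - (\sum_(i | P i) a i) * (n * s^*)
       - (\sum_(i | P i) (a i)^*) * (n * s) + \sum_(i | P i) (s * s^*).
    rewrite [_ * (n * s^*)]mulr_suml [_ * (n * s)]mulr_suml -!sumrB -big_split /=.
    apply: eq_bigr => i _. ring.
  rewrite -rmorph_sum sumr_const -/s -mulr_sumr.
  under eq_bigr => i _ do rewrite -normCK.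
  rewrite normCK -/n. ring.
have n0 : 0 <= n by rewrite ler0n.
have h0 : 0 <= n * (n * \sum_(i | P i) `|a i| ^+ 2 - `|s| ^+ 2).
  by rewrite -key sumr_ge0 // => i _; rewrite exprn_ge0.
case: (eqVneq n 0) => [nz|nnz].
  have : #|P| = 0%N by apply/eqP; rewrite -(eqr_nat algC) -/n nz.
  move/card0_eq => P0; rewrite /s big_pred0 // normr0 expr0n /=. by rewrite mulr_ge0 // sumr_ge0 // => i _; rewrite exprn_ge0.
have npos : 0 < n by rewrite lt_def nnz n0.
by move: h0; rewrite pmulr_rge0 // subr_ge0.
Qed.
Set Implicit Arguments.

Section Char.
Variables (K : finFieldType) (psi : K -> algC).
Hypothesis hpsi : is_nontriv_add_char psi.

Lemma psiD a b : psi (a + b) = psi a * psi b.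
Proof. by case: hpsi. Qed.
Lemma psi_norm a : `|psi a| = 1.
Proof. by case: hpsi => _ []. Qed.
Lemma psi_neq0 a : psi a != 0.
Proof. by rewrite -normr_eq0 psi_norm oner_eq0. Qed.
Lemma psi0 : psi 0 = 1.
Proof.
have h : psi 0 * psi 0 = psi 0 * 1 by rewrite mulr1 -psiD addr0.
exact: (mulfI (psi_neq0 0) h).
Qed.
Lemma psiN a : psi (- a) = (psi a)^*.
Proof.
apply: (mulfI (psi_neq0 a)); rewrite -psiD subrr psi0 -normCK psi_norm.
by rewrite expr1n.
Qed.
Lemma psi_sum0 : \sum_(u : K) psi u = 0.
Proof.
case: hpsi => [_ [_ [a ha]]].
have h : psi a * \sum_(u : K) psi u = \sum_(u : K) psi u.
  rewrite mulr_sumr [RHS](reindex_inj (addrI a)) /=.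
  by apply: eq_bigr => u _; rewrite psiD.
have : (psi a - 1) * \sum_(u : K) psi u = 0 by rewrite mulrBl h mul1r subrr.
by move/eqP; rewrite mulf_eq0 subr_eq0 (negPf ha) /= => /eqP.
Qed.
Lemma psi_orth (c : K) : \sum_(s : K) psi (s * c) = if c == 0 then #|K|%:R else 0.
Proof.
case: eqP => [->|/eqP cnz].
  under eq_bigr => s _ do rewrite mulr0 psi0.
  by rewrite sumr_const cardT.
transitivity (\sum_(u : K) psi u); last exact: psi_sum0.
by rewrite [RHS](reindex_inj (mulIf cnz)).
Qed.
Lemma indic_eq (a b : K) :
  ((a == b)%:R : algC) = #|K|%:R^-1 * \sum_(s : K) psi (s * a) * (psi (s * b))^*.
Proof.
have qnz : (#|K|%:R : algC) != 0 by rewrite pnatr_eq0 -lt0n; apply/card_gt0P; exists 0.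
under eq_bigr => s _ do rewrite -psiN -psiD -mulrN -mulrDr.
rewrite psi_orth subr_eq0; case: eqP => _; last by rewrite mulr0.
by rewrite mulVf.
Qed.
End Char.

Section Main.
Variables (K : finFieldType) (d : nat) (psi : K -> algC).
Hypothesis hpsi : is_nontriv_add_char psi.
Variables (E F : {set 'rV[K]_d}).
Hypothesis E0 : (0 : 'rV[K]_d) \notin E.

Local Notation V := 'rV[K]_d.
Let q : algC := #|K|%:R.
Let PP (p : V * V) := (p.1 \in E) && (p.2 \in F).
Let D (p : V * V) := dotv p.1 p.2.
Let nu (t : K) : algC := \sum_(p | PP p) ((D p == t)%:R).
Let G (s : K) : algC := \sum_(p | PP p) psi (s * D p).
Let H (z : V) : algC := \sum_(y in F) psi (dotv z y).

Lemma dotvZ s (x y : V) : dotv (s *: x) y = s * dotv x y.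
Proof. by rewrite /dotv mulr_sumr; apply: eq_bigr => i _; rewrite mxE mulrA. Qed.
Lemma dotvC (x y : V) : dotv x y = dotv y x.
Proof. by rewrite /dotv; apply: eq_bigr => i _; rewrite mulrC. Qed.

Lemma sum_ind1 (a : K) : \sum_(t : K) ((a == t)%:R : algC) = 1.
Proof.
rewrite (bigD1 a) //= eqxx big1 ?addr0 // => t ta.
by rewrite eq_sym (negPf ta).
Qed.
Lemma sum_ind2 (a b : K) :
  \sum_(t : K) (((a == t)%:R : algC) * (b == t)%:R) = (b == a)%:R.
Proof.
rewrite (bigD1 a) //= eqxx mul1r big1 ?addr0 // => t ta.
by rewrite eq_sym (negPf ta) mul0r.
Qed.

Lemma sumPP1 : \sum_(p | PP p) (1 : algC) = #|E|%:R * #|F|%:R.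
Proof.
rewrite -(pair_big (fun x => x \in E) (fun y => y \in F) (fun _ _ => (1:algC))) /=.
under eq_bigr => x _ do rewrite sumr_const.
by rewrite sumr_const -[_ *+ #|E|]mulr_natl.
Qed.

Lemma sum_nu : \sum_(t : K) nu t = #|E|%:R * #|F|%:R.
Proof.
rewrite /nu exchange_big /= -sumPP1; apply: eq_bigr => p _; exact: sum_ind1.
Qed.

Lemma nu_ge0 t : 0 <= nu t.
Proof. by rewrite sumr_ge0 // => p _; rewrite ler0n. Qed.

Lemma nu_out t : t \notin Pi E F -> nu t = 0.
Proof.
move=> tP; rewrite /nu big1 // => p /andP [h1 h2].
case: eqP => // Dt; case/negP: tP; rewrite -Dt /D /Pi.
by apply/imset2P; exists p.1 p.2.
Qed.

Lemma G0 : G 0 = #|E|%:R * #|F|%:R.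
Proof. by rewrite -sumPP1; apply: eq_bigr => p _; rewrite mul0r (psi0 hpsi). Qed.

Lemma sum_nu2 : \sum_(t : K) nu t ^+ 2 = q^-1 * \sum_(s : K) G s * (G s)^*.
Proof.
transitivity (\sum_(t : K) \sum_(p | PP p) \sum_(p' | PP p')
    (((D p == t)%:R : algC) * (D p' == t)%:R)).
  apply: eq_bigr => t _; rewrite expr2 /nu mulr_suml; apply: eq_bigr => p _.
  by rewrite mulr_sumr.
transitivity (\sum_(p | PP p) \sum_(p' | PP p') (((D p' == D p)%:R : algC))).
  rewrite exchange_big; apply: eq_bigr => p _; rewrite exchange_big.
  by apply: eq_bigr => p' _; rewrite sum_ind2.
under eq_bigr => p _ do under eq_bigr => p' _ do rewrite (indic_eq hpsi).
rewrite -/q.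
under eq_bigr => p _ do rewrite -mulr_sumr.
rewrite -mulr_sumr; congr (_ * _).
under eq_bigr => p _ do rewrite exchange_big.
rewrite exchange_big; apply: eq_bigr => s _.
rewrite /G rmorph_sum mulr_suml.
under [RHS]eq_bigr => p _ do rewrite mulr_sumr.
by rewrite [RHS]exchange_big.
Qed.

Lemma G_split s : G s = \sum_(x in E) H (s *: x).
Proof.
rewrite /G /D -(pair_big (fun x => x \in E) (fun y => y \in F)
   (fun x y => psi (s * dotv x y))) /=.
by apply: eq_bigr => x _; apply: eq_bigr => y _; rewrite dotvZ.
Qed.

Lemma G_bound s : `|G s| ^+ 2 <= #|E|%:R * \sum_(x in E) `|H (s *: x)| ^+ 2.
Proof. by rewrite G_split; apply: CS_sum. Qed.

Lemma q_gt0 : 0 < q.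
Proof. by rewrite /q ltr0n; apply/card_gt0P; exists 0. Qed.

Lemma fourier_H z : fourier psi (ind F) z = (q ^+ d)^-1 * (H z)^*.
Proof.
rewrite /fourier /H rmorph_sum [in RHS]big_mkcond /=; congr (_ * _).
apply: eq_bigr => y _; rewrite /ind; case: (y \in F).
  by rewrite mul1r (psiN hpsi) dotvC.
by rewrite mul0r.
Qed.

Lemma H_fourier z : `|H z| ^+ 2 = q ^+ (2 * d) * `|fourier psi (ind F) z| ^+ 2.
Proof.
have Q0 : q ^+ d != 0 by rewrite expf_eq0 negb_and (gt_eqF q_gt0) orbT.
rewrite fourier_H normrM norm_conjC ger0_norm; last first.
  by rewrite invr_ge0 exprn_ge0 // ltW // q_gt0.
by rewrite mulnC exprM exprMn mulrA -exprMn mulfV // expr1n mul1r.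
Qed.

Lemma S_reindex : lineSum psi E F =
  \sum_(s | s != 0) \sum_(x in E) `|fourier psi (ind F) (s *: x)| ^+ 2.
Proof.
rewrite /lineSum exchange_big /= [RHS](reindex_inj invr_inj) /=.
apply: eq_big => [s|s hs]; first by rewrite invr_eq0.
rewrite (reindex_inj (scalerI (a := s^-1) _)); last by rewrite invr_eq0.
rewrite big_mkcond [RHS]big_mkcond /=; apply: eq_bigr => z _.
rewrite scalerA mulfV // scale1r /ind; case zE: (z \in E).
  have zn0 : z != 0 by apply: contraNneq E0 => <-.
  by rewrite scaler_eq0 negb_or invr_eq0 hs zn0 mul1r.
by rewrite mul0r; case: ifP.
Qed.

Lemma sum_Pi (g : K -> algC) : (forall t, t \notin Pi E F -> g t = 0) ->
  \sum_(t : K) g t = \sum_(t in Pi E F) g t.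
Proof.
move=> hg; rewrite [LHS](bigID (fun t => t \in Pi E F)) /=.
by rewrite [X in _ + X]big1 ?addr0.
Qed.

Lemma main_ineq (d0 : (0 < d)%N) :
  (#|E|%:R * #|F|%:R) ^+ 2 <= #|Pi E F|%:R *
    (q^-1 * (#|E|%:R * #|F|%:R) ^+ 2 + q ^+ (2 * d - 1) * (#|E|%:R * lineSum psi E F)).
Proof.
set e : algC := #|E|%:R; set f : algC := #|F|%:R.
have step1 : (e * f) ^+ 2 <= #|Pi E F|%:R * \sum_(t : K) nu t ^+ 2.
  rewrite -sum_nu (sum_Pi nu); last exact: nu_out.
  rewrite (sum_Pi (fun t => nu t ^+ 2)); last by move=> t /nu_out ->; rewrite expr0n.
  rewrite -[X in X ^+ 2 <= _]ger0_norm; last by rewrite sumr_ge0 // => t _; exact: nu_ge0.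
  apply: le_trans (CS_sum _ (fun t => t \in Pi E F) nu) _.
  rewrite (eq_bigr (fun t => nu t ^+ 2)); last by move=> t _; rewrite ger0_norm ?nu_ge0.
  exact: lexx.
have qn0 : q != 0 by rewrite gt_eqF // q_gt0.
have qe : q ^+ (2 * d) = q * q ^+ (2 * d - 1).
  by rewrite -exprS subn1 prednK // muln_gt0.
have step2 : \sum_(t : K) nu t ^+ 2 <=
    q^-1 * (e * f) ^+ 2 + q ^+ (2 * d - 1) * (e * lineSum psi E F).
  rewrite sum_nu2 (bigD1 0) //= G0 rmorphM /= !conjC_nat -/e -/f -expr2 mulrDr lerD2l.
  have -> : q ^+ (2 * d - 1) * (e * lineSum psi E F)
      = q^-1 * (e * (q ^+ (2 * d) * lineSum psi E F)).
    by rewrite qe; field.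
  apply: ler_wpM2l; first by rewrite invr_ge0 ltW // q_gt0.
  under eq_bigr => s _ do rewrite -normCK.
  rewrite S_reindex mulr_sumr mulr_sumr; apply: ler_sum => s _.
  apply: le_trans (G_bound s) _; apply: ler_wpM2l; first exact: ler0n.
  by rewrite mulr_sumr; apply: ler_sum => x _; rewrite H_fourier.
apply: le_trans step1 _; apply: ler_wpM2l => //; exact: ler0n.
Qed.
End Main.

Lemma min_le (q y : algC) : 0 <= q -> 0 <= y ->
  Num.min q y <= q /\ Num.min q y <= y.
Proof.
move=> q0 y0; rewrite minElt; case: ifP => [qy|nqy].
  by split; [exact: lexx | exact: ltW].
split; last exact: lexx.
by move: nqy; rewrite real_ltNge ?ger0_real // => /negbFE.
Qed.

Lemma final_arith (P e f q T S : algC) :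
  0 <= P -> 0 <= e -> 0 <= f -> 0 < q -> 0 < T -> 0 <= S ->
  (e * f) ^+ 2 <= P * (q^-1 * (e * f) ^+ 2 + T * (e * S)) ->
  2^-1 * (if (S == 0) && (e * f ^+ 2 != 0) then q
          else Num.min q (e * f ^+ 2 / (T * S))) <= P.
Proof.
move=> P0 e0 f0 q0 T0 S0 h.
have two0 : (0 : algC) < 2 by rewrite ltr0n.
suff X2 : (if (S == 0) && (e * f ^+ 2 != 0) then q
          else Num.min q (e * f ^+ 2 / (T * S))) <= 2 * P.
  by rewrite -(ler_pM2l two0) mulrA mulfV ?mul1r // gt_eqF.
have y0 : 0 <= e * f ^+ 2 / (T * S).
  by rewrite divr_ge0 ?mulr_ge0 ?exprn_ge0 // ltW.
have [m1 m2] := @min_le q _ (ltW q0) y0.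
have P2 : 0 <= 2 * P by rewrite mulr_ge0 // ltW.
case: (eqVneq (e * f ^+ 2) 0) => [N0|N0].
  rewrite andbF; apply: (le_trans m2); by rewrite N0 mul0r.
have en0 : e != 0 by apply: contraNneq N0 => ->; rewrite mul0r.
have fn0 : f != 0 by apply: contraNneq N0 => ->; rewrite expr0n mulr0.
have A0 : 0 < (e * f) ^+ 2.
  by rewrite exprn_gt0 // lt_def mulf_neq0 // mulr_ge0.
set A := (e * f) ^+ 2 in h A0.
have fromq : A <= (2 * P) * (q^-1 * A) -> q <= 2 * P.
  rewrite mulrA ler_pMl // => h1.
  by move: h1; rewrite ler_pdivlMr // mul1r.
rewrite andbT; case: (eqVneq S 0) => [S00|Sn0] /=.
  apply: fromq; rewrite S00 !mulr0 addr0 in h.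
  apply: (le_trans h); rewrite ler_wpM2r //.
    by rewrite mulr_ge0 // ?invr_ge0 ?ltW // ltW.
  by rewrite mulr_natl mulr2n lerDl.
have Spos : 0 < S by rewrite lt_def Sn0 S0.
have Bpos : 0 < T * (e * S) by rewrite mulr_gt0 // mulr_gt0 // lt_def en0 e0.
have apos : 0 < q^-1 * A by rewrite mulr_gt0 // invr_gt0.
case/orP: (real_leVge (ger0_real (ltW apos)) (ger0_real (ltW Bpos))) => [aB|Ba].
  apply: (le_trans m2).
  have -> : e * f ^+ 2 / (T * S) = A / (T * (e * S)).
    rewrite /A; field; rewrite en0 (gt_eqF Spos) (gt_eqF T0) //.
  rewrite ler_pdivrMr //; apply: (le_trans h).
  by rewrite -mulrA [X in _ <= X]mulrCA ler_wpM2l // mulr_natl mulr2n lerD2r.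
apply: (le_trans m1); apply: fromq; apply: (le_trans h).
by rewrite -mulrA [X in _ <= X]mulrCA ler_wpM2l // mulr_natl mulr2n lerD2l.
Qed.

Unset Implicit Arguments.

Theorem lemma2p1 (d : nat) (hd : (2 <= d)%N) :
  exists c : algC, 0 < c < 1 /\
  forall (K : finFieldType) (psi : K -> algC),
    (forall p, p \in [pchar K] -> (2 < p)%N) ->
    is_nontriv_add_char psi ->
    forall E F : {set 'rV[K]_d}, (0 : 'rV[K]_d) \notin E ->
      let q : algC := #|K|%:R in
      let S : algC := lineSum psi E F in
      let N : algC := #|E|%:R * #|F|%:R ^+ 2 in
      c * (if (S == 0) && (N != 0) then q
           else Num.min q (N / (q ^+ (2 * d - 1) * S)))
        <= #|Pi E F|%:R.
Proof.
exists 2^-1; split.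
  have two0 : (0 : algC) < 2 by rewrite ltr0n.
  by rewrite invr_gt0 two0 /= invf_lt1 // ltr1n.
move=> K psi _ hpsi E F E0; rewrite /=.
have d0 : (0 < d)%N by apply: leq_trans hd.
have S0 : 0 <= lineSum psi E F.
  rewrite /lineSum sumr_ge0 // => x _; rewrite sumr_ge0 // => s _.
  by rewrite mulr_ge0 ?exprn_ge0 // /ind ler0n.
apply: final_arith => //; try exact: ler0n.
- exact: q_gt0.
- by rewrite exprn_gt0 // q_gt0.
- exact: (main_ineq hpsi E F E0 d0).
Qed.
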